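(* Let $T$ be a tree, with all vertex capacities equal to $1$, given a rooted planar embedding whose root is a leaf, and let $E$ be the set of edges from each non-leaf vertex to its first child (in the planar order). Then the tree associated to $(T,E)$ has distributable capacity. Moreover, if $E'$ is any set of edges of $T$ with $E'\cap E=\emptyset$ and $U$ is a connected component of the forest obtained by deleting $E'$ from $T$, then the tree associated to $(U,E\cap E(U))$ also has distributable capacity.
   Context: For a tree $T$ with vertex capacities $\mathrm{cap}(v)$ and a subset $E$ of its edges, the tree associated to $(T,E)$ is the tree whose vertices are the connected components of the forest obtained from $T$ by deleting the edges in $E$, whose edges are the edges of $E$, and in which the capacity of a component is the sum of the capacities of its vertices. A tree with capacities has distributable capacity if every vertex $v$ satisfies $\mathrm{cap}(v)\ge\deg(v)-1$. *)

(* Defs.v *)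
From mathcomp Require Import all_boot.
Set Implicit Arguments. Unset Strict Implicit. Unset Printing Implicit Defensive.

Section Defs.
Variable V : finType.

Definition is_rooted_tree (r : V) (par : V -> V) : Prop :=
  par r = r /\ forall v : V, exists k : nat, iter k par v = r.

Definition tedges (r : V) (par : V -> V) : {set {set V}} :=
  [set [set v; par v] | v in [set v : V | v != r]].

Definition gdeg (F : {set {set V}}) (v : V) : nat := #|[set e in F | v \in e]|.

Definition children (r : V) (par : V -> V) (v : V) : {set V} :=
  [set c : V | (c != r) && (par c == v)].

(* The planar embedding (order of the children of each vertex) is encoded
   by an injective rank: the children of v are ordered by increasing rank. *)
Definition first_child (r : V) (par : V -> V) (rank : V -> nat) (v c : V) : bool :=
  (c \in children r par v) && [forall c' in children r par v, rank c <= rank c'].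

(* E = edges from each non-leaf vertex (degree >= 2 in T) to its first child *)
Definition first_child_edges (r : V) (par : V -> V) (rank : V -> nat)
  : {set {set V}} :=
  [set [set v; c] | v in [set v : V | 1 < gdeg (tedges r par) v],
                    c in [set c : V | first_child r par rank v c]].

Definition adj (F : {set {set V}}) : rel V := fun x y => [set x; y] \in F.

Definition comp_of (W : {set V}) (F : {set {set V}}) (x : V) : {set V} :=
  [set y in W | connect (adj F) x y].

Definition comps (W : {set V}) (F : {set {set V}}) : {set {set V}} :=
  [set comp_of W F x | x in W].

Definition induced_edges (F : {set {set V}}) (U : {set V}) : {set {set V}} :=
  [set e in F | e \subset U].

End Defs.

Record ctree (A : finType) := CTree {
  ct_verts : {set A};
  ct_edges : {set {set A}};
  ct_cap   : A -> nat }.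

Definition ct_deg (A : finType) (G : ctree A) (v : A) : nat :=
  #|[set e in ct_edges G | v \in e]|.

Definition distributable (A : finType) (G : ctree A) : Prop :=
  forall v, v \in ct_verts G -> ct_deg G v - 1 <= ct_cap G v.

Definition assoc_tree (V : finType) (W : {set V}) (F E : {set {set V}})
  (cap : V -> nat) : ctree {set V} :=
  CTree (comps W (F :\: E))
        [set (comp_of W (F :\: E)) @: e | e : {set V} in E]
        (fun C => \sum_(v in C) cap v).

(* Main.v *)
Require Import Defs.
From mathcomp Require Import all_boot.
From mathcomp Require Import zify.

Section Key.
Variable V : finType.
Variables (r : V) (par : V -> V) (rank : V -> nat).
Hypothesis Hr : is_rooted_tree r par.
Hypothesis Hinj : injective rank.

Lemma par_neq v : v != r -> par v != v.
Proof.
move=> vr; apply/eqP=> pv; case: Hr => _ /(_ v) [k].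
have -> : iter k par v = v by elim: k => //= k ->.
by move=> E; rewrite E eqxx in vr.
Qed.

Lemma tedge_adj y z : [set y; z] \in tedges r par ->
  (z = par y /\ y != r) \/ (y = par z /\ z != r).
Proof.
case/imsetP => v; rewrite inE => vr E.
have pv := @par_neq v vr.
have yv : y \in [set v; par v] by rewrite -E set21.
have zv : z \in [set v; par v] by rewrite -E set22.
have vyz : v \in [set y; z] by rewrite E set21.
have pyz : par v \in [set y; z] by rewrite E set22.
move: pyz vyz; case/set2P: yv => ->; case/set2P: zv => ->.
- by move=> /set2P [] H; rewrite H eqxx in pv.
- by left.
- by right.
- by move=> _ /set2P [] H; rewrite -H eqxx in pv.
Qed.

Lemma fc_uniq v c c' : first_child r par rank v c -> first_child r par rank v c' -> c = c'.
Proof.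
rewrite /first_child => /andP [cin /forall_inP H] /andP [cin' /forall_inP H'].
apply: Hinj; apply/anti_leq; rewrite H // H' //.
Qed.

Lemma key (W : {set V}) (Fg Eg : {set {set V}}) :
  Fg :\: Eg \subset tedges r par -> Eg \subset first_child_edges r par rank ->
  (forall e, e \in Fg :\: Eg -> e \subset W) -> (forall e, e \in Eg -> e \subset W) ->
  distributable (assoc_tree W Fg Eg (fun _ => 1)).
Proof.
move=> HF HE HFW HEW C0 /imsetP [x0 x0W ->].
set F := Fg :\: Eg.
set C := comp_of W F x0.
rewrite /ct_deg /= sum1_card.
pose fc v := odflt v [pick c | first_child r par rank v c].
pose g v : {set V} := [set v; fc v].
pose Tops := [set c in C | par c \notin C].
pose S := [set e in Eg | C \in comp_of W F @: e].
have x0C : x0 \in C by rewrite inE x0W connect0.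
have stepA : [set e0 in [set comp_of W F @: e | e : {set V} in Eg] | C \in e0]
      \subset (fun e : {set V} => comp_of W F @: e) @: S.
  apply/subsetP => e0; rewrite inE => /andP [/imsetP [e eE ->] Ce].
  by apply/imsetP; exists e => //; rewrite inE eE Ce.
have stepB : S \subset g @: C :|: (fun c => [set par c; c]) @: Tops.
  apply/subsetP => e; rewrite inE => /andP [eE /imsetP [x xe Cx]].
  have xW : x \in W by apply: (subsetP (HEW e eE)).
  have xC : x \in C by rewrite Cx inE xW connect0.
  move: (subsetP HE e eE) => /imset2P [v c]; rewrite !inE => vdeg fvc Ee.
  rewrite Ee in xe *.
  case vC: (v \in C).
  - apply/orP; left; apply/imsetP; exists v => //.
    rewrite /g /fc; case: pickP => [c' fc'|/(_ c)]; last by rewrite fvc.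
    by rewrite (@fc_uniq v c c' fvc fc').
  - apply/orP; right.
    have pc : par c = v.
      by move: fvc; rewrite /first_child inE => /andP [/andP [_ /eqP]].
    have cC : c \in C.
      by case/set2P: xe => E; [rewrite E vC in xC | rewrite -E].
    by apply/imsetP; exists c; [rewrite inE cC pc vC | rewrite pc].
have symF : connect_sym (adj F).
  by apply: sym_connect_sym => a b; rewrite /adj setUC.
have stepC : #|Tops| <= 1.
  have TopsP c : (c \in Tops) = (c \in C) && (par c \notin C) by rewrite /Tops !inE.
  apply/card_le1_eqP => c1 c2; rewrite !TopsP => /andP [c1C pc1] /andP [c2C pc2].
  have anc : forall y, connect (adj F) c1 y ->
      exists k, iter k par y = c1 /\ forall j, j <= k -> iter j par y \in C.
    move=> y /connectP [p pp ->]; elim/last_ind: p pp => [|p z IH].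
      move=> _; exists 0; split; first by []. by move=> j; rewrite leqn0 => /eqP -> /=; exact: c1C.
    rewrite rcons_path last_rcons => /andP [pp adjz].
    have [k [Hk Hj]] := IH pp.
    move: Hk Hj adjz; move: (last c1 p) => w Hk Hj adjz.
    have yC : w \in C := Hj 0 isT.
    have zC : z \in C.
      move: yC; rewrite !inE => /andP [_ cy].
      rewrite (subsetP (HFW _ adjz)) ?set22 //=.
      by apply: connect_trans cy (connect1 adjz).
    have := @tedge_adj w z (subsetP HF _ adjz).
    case=> [[zp yr]|[yp zr]].
    - case: k Hk Hj => [|k] Hk Hj.
        by move: Hk => /= Hk; rewrite zp Hk (negbTE pc1) in zC.
      exists k; split; first by rewrite zp -iterSr.
      by move=> j jk; rewrite zp -iterSr; apply: Hj.
    - exists k.+1; split; first by rewrite iterSr -yp.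
      by case=> [|j] jk //; rewrite iterSr -yp; apply: Hj.
  have c12 : connect (adj F) c1 c2.
    move: c1C c2C; rewrite !inE => /andP [_ h1] /andP [_ h2].
    by apply: connect_trans h2; rewrite symF.
  have [[|k] [Hk Hj]] := anc _ c12; first by rewrite -Hk.
  by have := Hj 1 isT; rewrite /= (negbTE pc2).
have h1 := subset_leq_card stepA.
have h2 := leq_imset_card (fun e : {set V} => comp_of W F @: e) S.
have h3 := subset_leq_card stepB.
have h4 := leq_imset_card g C.
have h5 := leq_imset_card (fun c => [set par c; c]) Tops.
rewrite cardsU in h3.
rewrite leq_subLR; apply: (leq_trans h1); apply: (leq_trans h2).
apply: (leq_trans (subset_leq_card stepB)); rewrite cardsU.
apply: leq_trans (leq_subr _ _) _; rewrite addnC; apply: leq_add.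
  exact: leq_trans h5 stepC.
exact: h4.
Qed.

End Key.

Theorem mainTheorem5 (V : finType) (r : V) (par : V -> V) (rank : V -> nat) :
  is_rooted_tree r par ->
  injective rank ->
  gdeg (tedges r par) r = 1 ->
  distributable
    (assoc_tree [set: V] (tedges r par) (first_child_edges r par rank)
                (fun _ => 1)) /\
  (forall (E' : {set {set V}}) (U : {set V}),
     E' \subset tedges r par ->
     [disjoint E' & first_child_edges r par rank] ->
     U \in comps [set: V] (tedges r par :\: E') ->
     distributable
       (assoc_tree U (induced_edges (tedges r par) U)
          (first_child_edges r par rank :&: induced_edges (tedges r par) U)
          (fun _ => 1))).
Proof.
move=> Hr Hinj _; split.
  eapply (@key V r par rank Hr Hinj); [exact: subsetDl | exact: subxx | by move=> *; apply: subsetT | by move=> *; apply: subsetT].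
move=> E' U _ _ _; eapply (@key V r par rank Hr Hinj).
all: try exact: subsetIl.
all: try by move=> e; rewrite !inE => /andP [_ /andP [_ ->]].
all: try by move=> e; rewrite !inE => /andP [_ /andP [_ ->]].
all: try by apply/subsetP => e; rewrite !inE => /andP [_ /andP [-> _]].
all: idtac.
Qed.
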